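(* Let $\mathbf S=\langle S,\wedge,1\rangle$ be a meet semilattice with top element $1$, and let $\operatorname{Sub}\mathbf S$ denote the lattice of subsemilattices of $\mathbf S$ containing $1$. (a) If $\varepsilon$ is a distributive quasi-order on $\mathbf S$, then $\operatorname{Sub}(\mathbf S,\varepsilon)$, the lattice of all $\varepsilon$-closed subsemilattices containing $1$, is a complete sublattice of $\operatorname{Sub}\mathbf S$. (b) Conversely, let $\mathbf T$ be a complete sublattice of $\operatorname{Sub}\mathbf S$, and define $c\,\rho\,d$ iff for all $X\in\mathbf T$, $c\in X$ implies $d\in X$. Then $\rho$ is a distributive quasi-order, $\mathbf T$ consists precisely of the $\rho$-closed members of $\operatorname{Sub}\mathbf S$, and $\rho$ satisfies (3) if $c\,\rho\,d_1$ and $c\,\rho\,d_2$ then $c\,\rho\,d_1\wedge d_2$; and (4) $c\,\rho\,1$ for all $c\in S$. (c) The correspondence between complete sublattices of $\operatorname{Sub}\mathbf S$ and distributive quasi-orders satisfying (3) and (4) is a dual isomorphism.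
   Context: A quasi-order $\varepsilon$ on $\mathbf S$ is distributive if (1) whenever $c_1\wedge c_2\,\varepsilon\,d$ there exist $d_1,d_2$ with $c_i\,\varepsilon\,d_i$ ($i=1,2$) and $d=d_1\wedge d_2$, and (2) $1\,\varepsilon\,d$ implies $d=1$. A subset $X$ is $\varepsilon$-closed if $c\in X$ and $c\,\varepsilon\,d$ imply $d\in X$. A complete sublattice is a subset closed under arbitrary meets and joins computed in $\operatorname{Sub}\mathbf S$. Quasi-orders are ordered by inclusion. *)

(* Defs.v *)
From HB Require Import structures.
From mathcomp Require Import all_boot all_order.
From mathcomp Require Import classical_sets.
Set Implicit Arguments. Unset Strict Implicit. Unset Printing Implicit Defensive.

Local Open Scope classical_set_scope.

Section Defs.
Context {disp : Order.disp_t} {S : tMeetSemilatticeType disp}.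

Definition is_sub (X : set S) : Prop :=
  X Order.top /\ forall x y, X x -> X y -> X (Order.meet x y).

Definition SubS : set (set S) := [set X | is_sub X].

Definition subMeet (F : set (set S)) : set S := \bigcap_(X in F) X.

Definition subJoin (F : set (set S)) : set S :=
  \bigcap_(Y in [set Y | is_sub Y /\ (\bigcup_(X in F) X) `<=` Y]) Y.

Definition complete_sublattice (T : set (set S)) : Prop :=
  T `<=` SubS /\
  forall F : set (set S), F `<=` T -> T (subMeet F) /\ T (subJoin F).

Definition quasi_order (e : S -> S -> Prop) : Prop :=
  (forall c, e c c) /\ (forall c d f, e c d -> e d f -> e c f).

Definition distributive (e : S -> S -> Prop) : Prop :=
  (forall c1 c2 d, e (Order.meet c1 c2) d ->
     exists d1 d2, e c1 d1 /\ e c2 d2 /\ d = Order.meet d1 d2) /\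
  (forall d, e Order.top d -> d = Order.top).

Definition distributive_quasi_order (e : S -> S -> Prop) : Prop :=
  quasi_order e /\ distributive e.

Definition cond3 (e : S -> S -> Prop) : Prop :=
  forall c d1 d2, e c d1 -> e c d2 -> e c (Order.meet d1 d2).
Definition cond4 (e : S -> S -> Prop) : Prop :=
  forall c, e c Order.top.

Definition eps_closed (e : S -> S -> Prop) (X : set S) : Prop :=
  forall c d, X c -> e c d -> X d.

Definition SubEps (e : S -> S -> Prop) : set (set S) :=
  [set X | is_sub X /\ eps_closed e X].

Definition rho_of (T : set (set S)) (c d : S) : Prop :=
  forall X, T X -> X c -> X d.

End Defs.

(* Main.v *)
Require Import Defs.
From HB Require Import structures.
From mathcomp Require Import all_boot all_order.
From mathcomp Require Import classical_sets.
Local Open Scope classical_set_scope.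

Import Order.LTheory.
Section Helpers.
Context {disp : Order.disp_t} {S : tMeetSemilatticeType disp}.
Implicit Types (X Y : set S) (F T : set (set S)).

Lemma subJoin_sub F : is_sub (subJoin F).
Proof.
split.
- by move=> Y [[]].
- by move=> x y Hx Hy Y HY; case: (HY) => [[_ HYm] _]; apply: HYm; [apply: Hx|apply: Hy].
Qed.

Lemma subJoin_ub F X : F X -> forall x, X x -> subJoin F x.
Proof. by move=> FX x Xx Y [_ HU]; apply: HU; exists X. Qed.

Lemma subJoin_least F Y : is_sub Y -> (forall X, F X -> X `<=` Y) -> subJoin F `<=` Y.
Proof. by move=> sY HY x Hx; apply: Hx; split => // z [X FX Xz]; exact: HY FX z Xz. Qed.

Lemma subMeet_sub F : F `<=` SubS -> is_sub (subMeet F).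
Proof.
move=> HF; split.
- by move=> X FX; case: (HF X FX).
- move=> x y Hx Hy X FX; case: (HF X FX) => _ Hm; apply: Hm; [exact: Hx|exact: Hy].
Qed.

Lemma part_a (e : S -> S -> Prop) : distributive_quasi_order e ->
  complete_sublattice (SubEps e).
Proof.
move=> [[er et] [ed1 ed2]]; split; first by move=> X [].
move=> F HF; split.
- split.
  + by apply: subMeet_sub => X /HF [].
  + move=> c d Hc Hcd X FX; case: (HF X FX) => _ Hcl; exact: Hcl c d (Hc X FX) Hcd.
- split; first exact: subJoin_sub.
  pose K := [set c | forall d, e c d -> subJoin F d].
  have sK : is_sub K.
    split.
    + by move=> d /ed2 ->; case: (subJoin_sub F).
    + move=> x y Hx Hy d /ed1 [d1 [d2 [H1 [H2 ->]]]].
      case: (subJoin_sub F) => _ Hm; apply: Hm; [exact: Hx|exact: Hy].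
  have JK : subJoin F `<=` K.
    apply: subJoin_least => // X FX x Xx d Hxd.
    case: (HF X FX) => _ Hcl; exact: (subJoin_ub _ _ FX _ (Hcl x d Xx Hxd)).
  by move=> c d Hc Hcd; exact: JK c Hc d Hcd.
Qed.

Definition Xc T (c : S) : set S := subMeet [set X | T X /\ X c].

Lemma Xc_T T c : complete_sublattice T -> T (Xc T c).
Proof. by move=> [_ HT]; case: (HT [set X | T X /\ X c]) => // X []. Qed.

Lemma rhoE T c d : complete_sublattice T -> rho_of T c d <-> Xc T c d.
Proof.
move=> HT; split.
- move=> H; apply: H; first exact: Xc_T.
  by move=> X [].
- by move=> H X TX Xc; apply: H.
Qed.

Lemma part_b T : complete_sublattice T ->
     [/\ distributive_quasi_order (rho_of T),
         T = [set X | SubS X /\ eps_closed (rho_of T) X],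
         cond3 (rho_of T) & cond4 (rho_of T)].
Proof.
move=> HT; have [TS TC] := HT.
split.
- split; first by split; [move=> c X|move=> c d f H1 H2 X TX Xc; apply: H2 => //; apply: H1].
  split.
  + move=> c1 c2 d /(rhoE _ _ _ HT) Hd.
    pose F := [set Y | Y = Xc T c1 \/ Y = Xc T c2].
    have FT : F `<=` T by move=> Y [->|->]; exact: Xc_T.
    have TJ := (TC F FT).2.
    have dJ : subJoin F d.
      apply: Hd; split => //.
      case: (subJoin_sub F) => _ Hm; apply: Hm.
      * apply: (@subJoin_ub _ ( Xc T c1)); first by left.
        by move=> Y [].
      * apply: (@subJoin_ub _ ( Xc T c2)); first by right.
        by move=> Y [].
    pose P := [set z | exists a b, Xc T c1 a /\ Xc T c2 b /\ z = Order.meet a b].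
    have sP : is_sub P.
      have [t1 m1] := TS _ (Xc_T _ c1 HT).
      have [t2 m2] := TS _ (Xc_T _ c2 HT).
      split.
      * by exists Order.top, Order.top; rewrite meetxx.
      * move=> x y [a [b [Ha [Hb ->]]]] [a' [b' [Ha' [Hb' ->]]]].
        exists (Order.meet a a'), (Order.meet b b'); split; [exact: m1|split; [exact: m2|]].
        by rewrite meetACA.
    have JP : subJoin F `<=` P.
      apply: subJoin_least => // X [->|->] x Hx.
      * have [t2 _] := TS _ (Xc_T _ c2 HT).
        by exists x, Order.top; rewrite meetx1.
      * have [t1 _] := TS _ (Xc_T _ c1 HT).
        by exists Order.top, x; rewrite meet1x.
    have [a [b [Ha [Hb ->]]]] := JP d dJ.
    exists a, b; split; [exact/(rhoE _ _ _ HT)|split; [exact/(rhoE _ _ _ HT)|by []]].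
  + move=> d Hd.
    have T0 := (TC set0 (fun _ (H : set0 _) => match H with end)).2.
    have := Hd _ T0 (subJoin_sub set0).1.
    move=> H; apply: (H [set Order.top]); split.
    * by split => // x y -> ->; rewrite meetxx.
    * by move=> z [X []].
- apply/seteqP; split.
  + move=> X TX; split; first exact: TS.
    by move=> c d Xc Hcd; exact: Hcd X TX Xc.
  + move=> X [sX cX].
    pose F := [set Y | exists2 c, X c & Y = Xc T c].
    have FT : F `<=` T by move=> Y [c _ ->]; exact: Xc_T.
    suff -> : X = subJoin F by exact: (TC F FT).2.
    apply/seteqP; split.
    * move=> x Xx; apply: (@subJoin_ub _ ( Xc T x)); first by exists x.
      by move=> Y [].
    * apply: subJoin_least => // Y [c Xc0 ->] y Hy.
      by apply: (cX c) => //; apply/(rhoE _ _ _ HT).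
- move=> c d1 d2 H1 H2 X TX Xc; have [_ Hm] := TS X TX; apply: Hm; [exact: H1|exact: H2].
- by move=> c X TX _; case: (TS X TX).
Qed.

End Helpers.
Theorem theorem8p1 (disp : Order.disp_t) (S : tMeetSemilatticeType disp) :
  (* (a) *)
  (forall e : S -> S -> Prop, distributive_quasi_order e ->
     complete_sublattice (SubEps e)) /\
  (* (b) *)
  (forall T : set (set S), complete_sublattice T ->
     [/\ distributive_quasi_order (rho_of T),
         T = [set X | SubS X /\ eps_closed (rho_of T) X],
         cond3 (rho_of T) & cond4 (rho_of T)]) /\
  (* (c) the correspondence T |-> rho_of T, e |-> SubEps e is a dual
     isomorphism between complete sublattices of Sub S and distributive
     quasi-orders satisfying (3) and (4) *)
  [/\ (forall e : S -> S -> Prop,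
         [/\ distributive_quasi_order e, cond3 e & cond4 e] ->
         forall c d, rho_of (SubEps e) c d <-> e c d),
      (forall T : set (set S), complete_sublattice T -> SubEps (rho_of T) = T),
      (forall e1 e2 : S -> S -> Prop,
         [/\ distributive_quasi_order e1, cond3 e1 & cond4 e1] ->
         [/\ distributive_quasi_order e2, cond3 e2 & cond4 e2] ->
         ((forall c d, e1 c d -> e2 c d) <-> SubEps e2 `<=` SubEps e1))
    & (forall T1 T2 : set (set S),
         complete_sublattice T1 -> complete_sublattice T2 ->
         (T1 `<=` T2 <-> (forall c d, rho_of T2 c d -> rho_of T1 c d)))].
Proof.
have pb := @part_b disp S.
split; first exact: part_a.
split; first exact: pb.
have c2 : forall T : set (set S), complete_sublattice T -> SubEps (rho_of T) = T.
  by move=> T HT; case: (pb T HT) => _ E _ _; rewrite [RHS]E.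
have c1 : forall e : S -> S -> Prop,
         [/\ distributive_quasi_order e, cond3 e & cond4 e] ->
         forall c d, rho_of (SubEps e) c d <-> e c d.
  move=> e [[[er et] _] e3 e4] c d; split.
  - move=> H; apply: (H [set z | e c z]) => //=; split; first split.
    + exact: e4.
    + move=> x y; exact: e3.
    + by move=> x y Hx Hy; exact: et Hx Hy.
  - by move=> H X [_ Hcl] Xc; exact: Hcl c d Xc H.
split=> //.
- move=> e1 e2 H1 H2; split.
  + by move=> H X [sX cX]; split => // c d Xc /H; exact: cX.
  + move=> H c d /(c1 e1 H1) H' ; apply/(c1 e2 H2) => X HX Xc.
    exact: H' X (H X HX) Xc.
- move=> T1 T2 H1 H2; split.
  + by move=> H c d Hr X TX; apply: Hr; apply: H.
  + move=> H X TX; rewrite -(c2 T2 H2); rewrite -(c2 T1 H1) in TX.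
    case: TX => sX cX; split => // c d Xc Hr; exact: cX c d Xc (H c d Hr).
Qed.
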